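(* For every graph $G$ on $n$ vertices, $\operatorname{box}(G)\le MVC(G)+2=n-\alpha(G)+2$.
   Context: $MVC(G)$ is the minimum cardinality of a vertex cover of $G$ (a set of vertices meeting every edge) and $\alpha(G)$ is the maximum size of an independent set. The boxicity $\operatorname{box}(G)$ is the minimum $b$ such that $G$ is the intersection graph of axis-parallel boxes in $\mathbb{R}^b$ (products of $b$ closed intervals), one box per vertex. *)

(* Defs.v *)
From mathcomp Require Import all_boot all_order all_algebra.
From mathcomp Require Import reals.
Set Implicit Arguments. Unset Strict Implicit. Unset Printing Implicit Defensive.
Import Order.TTheory GRing.Theory Num.Theory.

Definition simple_graph (T : finType) (e : rel T) : Prop :=
  symmetric e /\ irreflexive e.

Definition vertex_cover (T : finType) (e : rel T) (C : {set T}) : bool :=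
  [forall x, forall y, e x y ==> (x \in C) || (y \in C)].

Definition independent (T : finType) (e : rel T) (S : {set T}) : bool :=
  [forall x in S, forall y in S, ~~ e x y].

Lemma vertex_cover_setT (T : finType) (e : rel T) :
  exists k, [exists C : {set T}, vertex_cover e C && (#|C| == k)].
Proof.
exists #|[set: T]|; apply/existsP; exists [set: T]; rewrite eqxx andbT.
by apply/forallP => x; apply/forallP => y; rewrite in_setT implybT.
Qed.

Definition mvc (T : finType) (e : rel T) : nat := ex_minn (vertex_cover_setT e).

Definition alpha (T : finType) (e : rel T) : nat :=
  \max_(S : {set T} | independent e S) #|S|.

Local Open Scope ring_scope.

(* G is the intersection graph of axis-parallel boxes in R^d: each vertex x
   gets the (nonempty) box prod_i [lo x i, hi x i], and two distinct vertices
   are adjacent iff their boxes intersect. *)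
Definition box_representable (R : realType) (T : finType) (e : rel T) (d : nat)
  : Prop :=
  exists (lo hi : T -> 'I_d -> R),
    (forall x i, lo x i <= hi x i) /\
    (forall x y, x != y ->
       (e x y <-> forall i, lo x i <= hi y i /\ lo y i <= hi x i)).

Definition is_boxicity (R : realType) (T : finType) (e : rel T) (b : nat) : Prop :=
  box_representable R e b /\
  (forall b', box_representable R e b' -> (b <= b')%N).

(* Main.v *)
Require Import Defs.
From mathcomp Require Import all_boot all_order all_algebra.
From mathcomp Require Import reals.
From mathcomp Require Import boolp zify.
Set Implicit Arguments. Unset Strict Implicit. Unset Printing Implicit Defensive.
Import Order.TTheory GRing.Theory Num.Theory.

Section S.
Variables (R : realType) (T : finType) (e : rel T).
Hypothesis (esym : symmetric e) (eirr : irreflexive e).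
Variable C : {set T}.
Hypothesis Ccov : vertex_cover e C.

Local Open Scope ring_scope.

Definition lo (x : T) (i : 'I_#|C|.+1) : R :=
  match (insub (val i) : option 'I_#|C|) with
  | Some j => let c := @enum_val T (mem C) j in
      if x == c then 0 else if e x c then 0 else 1
  | None => if x \in C then 0 else (enum_rank x : nat)%:R
  end.

Definition hi (x : T) (i : 'I_#|C|.+1) : R :=
  match (insub (val i) : option 'I_#|C|) with
  | Some j => let c := @enum_val T (mem C) j in
      if x == c then 0 else 1
  | None => if x \in C then #|T|%:R else (enum_rank x : nat)%:R
  end.

Lemma rep : box_representable R e #|C|.+1.
Proof.
exists lo, hi; split.
  move=> x i; rewrite /lo /hi; case: insubP => [j _ _|_].
    by case: eqP => //; case: (e _ _); rewrite ?ler01.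
  by case: (x \in C); rewrite ?ler0n.
have covP : forall x y, e x y -> (x \in C) || (y \in C).
  by move=> x y; move: Ccov => /forallP/(_ x)/forallP/(_ y)/implyP.
have rk : forall x : T, (enum_rank x : nat)%:R <= #|T|%:R :> R.
  by move=> x; rewrite ler_nat; exact: ltnW (ltn_ord _).
have dimC : forall z, z \in C -> exists i, hi z i = 0 /\
    forall w, w != z -> ~~ e w z -> lo w i = 1.
  move=> z zC.
  pose j := enum_rank_in zC z.
  have jlt : (val j < #|C|.+1)%N by apply: (ltn_trans (ltn_ord j)).
  exists (Ordinal jlt); rewrite /lo /hi; case: insubP => [j' _ hj'|]; last first.
    by rewrite /= ltn_ord.
  have -> : j' = j by apply/val_inj; rewrite hj'.
  rewrite /j enum_rankK_in // eqxx; split => // w wz nwz.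
  by rewrite (negbTE wz) (negbTE nwz).
move=> x y nxy; split.
  move=> exy i; rewrite /lo /hi; case: insubP => [j _ _|_].
    set c := enum_val j.
    case: (eqVneq x c) => [xc|xc].
      have yc : y != c by rewrite -xc eq_sym.
      rewrite (negbTE yc) -xc esym exy; split; by rewrite ?ler01.
    case: (eqVneq y c) => [yc|yc].
      rewrite -yc exy; split; by rewrite ?ler01.
    by split; case: (e _ _); rewrite ?ler01.
  case/orP: (covP _ _ exy) => [xC|yC].
    rewrite xC; split; first by case: (y \in C); rewrite ?ler0n.
    by case: (y \in C); rewrite ?ler0n ?rk.
  rewrite yC; split; last by case: (x \in C); rewrite ?ler0n.
  by case: (x \in C); rewrite ?ler0n ?rk.
move=> H; case: (boolP (e x y)) => // nexy; exfalso.
have [xC|xC] := boolP (x \in C).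
  have [k [hz lw]] := dimC x xC.
  have [_ Hw] := H k.
  have l1 : lo y k = 1 by apply: lw; [rewrite eq_sym | rewrite esym].
  by rewrite hz l1 ler10 in Hw.
have [yC|yC] := boolP (y \in C).
  have [k [hz lw]] := dimC y yC.
  have [Hz _] := H k.
  have l1 := lw x nxy nexy.
  by rewrite hz l1 ler10 in Hz.
have [Hz Hw] := H ord_max.
move: Hz Hw; rewrite /lo /hi; case: insubP => [j _ hj|_]; first by move: (ltn_ord j); rewrite hj /= ltnn.
rewrite (negbTE xC) (negbTE yC) !ler_nat => h1 h2.
have : enum_rank x = enum_rank y by apply/val_inj/anti_leq; rewrite h1 h2.
by move/enum_rank_inj=> exy; rewrite exy eqxx in nxy.
Qed.
End S.

Lemma compl_indep (T : finType) (e : rel T) (C : {set T}) :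
  irreflexive e -> vertex_cover e C -> independent e (~: C).
Proof.
move=> irr /forallP cov; apply/forallP => x; apply/implyP => xC.
apply/forallP => y; apply/implyP => yC; apply/negP => exy.
rewrite !in_setC in xC yC.
by move: (cov x) => /forallP/(_ y)/implyP/(_ exy); rewrite (negbTE xC) (negbTE yC).
Qed.

Lemma compl_cover (T : finType) (e : rel T) (S : {set T}) :
  independent e S -> vertex_cover e (~: S).
Proof.
move=> /forallP ind; apply/forallP => x; apply/forallP => y; apply/implyP => exy.
rewrite !in_setC -negb_and; apply/negP => /andP [xS yS].
by move: (ind x) => /implyP/(_ xS)/forallP/(_ y)/implyP/(_ yS); rewrite exy.
Qed.

Theorem theorem15 (R : realType) (T : finType) (e : rel T) :
  simple_graph e ->
  mvc e = (#|T| - alpha e)%N /\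
  exists b : nat, is_boxicity R e b /\ (b <= mvc e + 2)%N.
Proof.
move=> [esym eirr].
have [C covC cardC] : exists2 C : {set T}, vertex_cover e C & #|C| = mvc e.
  rewrite /mvc; case: ex_minnP => m /existsP [C /andP [cC /eqP cardC]] _.
  by exists C.
have minC : forall D : {set T}, vertex_cover e D -> (mvc e <= #|D|)%N.
  move=> D cD; rewrite /mvc; case: ex_minnP => m _; apply.
  by apply/existsP; exists D; rewrite cD eqxx.
split.
  have h1 : (#|T| - mvc e <= alpha e)%N.
    have : (#|~: C| <= alpha e)%N.
      by rewrite /alpha; apply: (leq_bigmax_cond (~: C)); apply: compl_indep.
    have := cardsC C; lia.
  have h2 : (alpha e <= #|T| - mvc e)%N.
    rewrite /alpha; apply/bigmax_leqP => S iS.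
    have := minC _ (compl_cover iS); have := cardsC S.
    have := max_card (mem S); lia.
  have h3 : (mvc e <= #|T|)%N by rewrite -cardC max_card.
  lia.
have rC := rep R esym covC.
pose P b := `[< box_representable R e b >].
have exP : exists b, P b by exists #|C|.+1; apply/asboolP.
case: (ex_minnP exP) => b /asboolP Pb minb.
exists b; split.
  split => // b' Hb'; apply: minb; exact/asboolP.
have := minb _ (asboolT rC); lia.
Qed.
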